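(* Let $\omega=(\omega_0,\dots,\omega_d)\in\mathbb{R}^{d+1}_{>0}$ with $\omega_0\le\omega_1\le\dots\le\omega_d$. Then for every $i\in\{1,\dots,d-1\}$, $$\mu_i(S(\omega))\leqslant\frac{\Big(\frac{1}{\omega_0}+\sum_{k=i+1}^d\frac{1}{\omega_k}\Big)\Big(\sum_{j=1}^i\frac{1}{\omega_j}\Big)+\sum_{1\le s<t\le i}\frac{1}{\omega_s\omega_t}}{\sum_{k=0}^d\frac{1}{\omega_k}}.$$
   Context: $S(\omega)=\operatorname{conv}(-\omega_0\mathbb{1}_d,\omega_1e_1,\dots,\omega_de_d)\subseteq\mathbb{R}^d$. For a convex body $K\subseteq\mathbb{R}^d$ and $i\in\{1,\dots,d\}$, $\mu_i(K)=\min\{\mu\ge0:(\mu K+\mathbb{Z}^d)\cap U\ne\emptyset$ for every $(d-i)$-dimensional affine subspace $U\subseteq\mathbb{R}^d\}$. *)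

(* Defs.v *)
From HB Require Import structures.
From mathcomp Require Import all_boot all_order all_algebra.
From mathcomp Require Import all_classical reals.
Set Implicit Arguments. Unset Strict Implicit. Unset Printing Implicit Defensive.
Import Order.TTheory GRing.Theory Num.Theory.
Local Open Scope ring_scope.
Local Open Scope classical_set_scope.

Definition lattice (R : realType) (d : nat) : set 'rV[R]_d :=
  [set z | exists n : 'rV[int]_d, z = map_mx (fun k : int => k%:~R) n].

Definition convex_hull_of (R : realType) (d m : nat) (p : 'I_m -> 'rV[R]_d)
  : set 'rV[R]_d :=
  [set x | exists lam : 'I_m -> R,
     (forall k, 0 <= lam k) /\ \sum_(k < m) lam k = 1 /\
     x = \sum_(k < m) lam k *: p k].

(* Vertices of S(omega): vertex 0 is -omega_0 * (1,...,1), vertex j+1 is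
   omega_{j+1} e_{j+1} (coordinate j, 0-based). *)
Definition S_vertex (R : realType) (d : nat) (w : nat -> R) (k : 'I_d.+1)
  : 'rV[R]_d :=
  match unlift ord0 k with
  | None => - (w 0%N) *: const_mx 1
  | Some j => w (j.+1)%N *: delta_mx 0 j
  end.

Definition S_simplex (R : realType) (d : nat) (w : nat -> R) : set 'rV[R]_d :=
  convex_hull_of (@S_vertex R d w).

Definition affine_subspace (R : realType) (d n : nat) (a : 'rV[R]_d)
  (B : 'M[R]_(n, d)) : set 'rV[R]_d :=
  [set x | exists u : 'rV[R]_n, x = a + u *m B].

Definition covering_set (R : realType) (d i : nat) (K : set 'rV[R]_d) : set R :=
  [set mu | 0 <= mu /\
     forall (a : 'rV[R]_d) (B : 'M[R]_(d - i, d)), \rank B = (d - i)%N ->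
       exists x z y, K x /\ lattice z /\ affine_subspace a B y /\
                     y = mu *: x + z].

Definition successive_covering_min (R : realType) (d i : nat)
  (K : set 'rV[R]_d) : R := inf (covering_set i K).

(* Main.v *)
Require Import Defs.
From HB Require Import structures.
From mathcomp Require Import all_boot all_order all_algebra.
From mathcomp Require Import all_classical reals.
From mathcomp Require Import ring lra zify.
Import Order.TTheory GRing.Theory Num.Theory.
Local Open Scope ring_scope.
Lemma zeros_exist {R : fieldType} n d (B : 'M[R]_(n, d)) (a : 'rV_d) :
  \rank B = n -> exists u : 'rV_n, (n <= #|[set j | ((a + u *m B) 0 j == 0)%R]|)%N.
Proof.
move=> rB.
set A := B^T. set f := maxrankfun A.
have fr := maxrowsub_free A.
have full : row_full (rowsub f A)^T.
  by rewrite /row_full mxrank_tr (eqP fr).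
pose c := \row_k (- a 0 (f k)) : 'rV_(\rank A).
have /submxP [D hD] := submx_full c full.
exists D.
have sub : f @: [set: 'I_(\rank A)]%SET \subset [set j | (a + D *m B) 0 j == 0].
  apply/fintype.subsetP => j /imsetP [k _ ->]; rewrite inE !mxE.
  have := congr1 (fun M : 'rV_(\rank A) => M 0 k) hD; rewrite !mxE => h.
  rewrite (_ : \sum_j0 _ = - a 0 (f k)) ?subrr // h.
  by apply: eq_bigr => l _; rewrite !mxE.
rewrite -{1}rB -(mxrank_tr B); apply: leq_trans (subset_leq_card sub).
rewrite card_imset ?cardsT ?card_ord //. exact: (@maxrankfun_inj _ _ _ A).
Qed.
Section Comb.
Variable R : realType.
Variable a : nat -> R.

Definition Pf d i := a 0%N + \sum_(i.+1 <= k < d.+1) a k.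
Definition Qf i := \sum_(1 <= j < i.+1) a j.
Definition E2f i := \sum_(1 <= s < i.+1) \sum_(s.+1 <= t < i.+1) a s * a t.
Definition Nf d i := Pf d i * Qf i + E2f i.
Definition cnt (chi : nat -> bool) d := (\sum_(1 <= j < d.+1) (chi j : nat))%N.
Definition Dp chi d := \sum_(0 <= m < d.+1) \sum_(0 <= k < m)
   a k * a m * (~~ (chi k && chi m))%:R.
Definition Sn chi d := \sum_(0 <= k < d.+1) a k * (~~ chi k)%:R.

Lemma Pf_S d i : (i <= d)%N -> Pf d.+1 i = Pf d i + a d.+1.
Proof. by move=> h; rewrite /Pf big_nat_recr //= addrA. Qed.

Lemma Pf_diag d : Pf d d = a 0%N.
Proof. by rewrite /Pf big_geq // addr0. Qed.

Lemma Qf_S i : Qf i.+1 = Qf i + a i.+1.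
Proof. by rewrite /Qf big_nat_recr. Qed.

Lemma Qf0 : Qf 0 = 0.
Proof. by rewrite /Qf big_geq. Qed.

Lemma E2f_S i : E2f i.+1 = E2f i + a i.+1 * Qf i.
Proof.
rewrite /E2f big_nat_recr //= [X in _ + X]big_geq // addr0 /Qf big_distrr -big_split /=.
apply: eq_big_nat => s /andP [h1 h2].
by rewrite big_nat_recr //= mulrC.
Qed.

Lemma Pf_dn d j : (j < d)%N -> Pf d j = Pf d j.+1 + a j.+1.
Proof. by move=> h; rewrite /Pf (big_ltn (m := j.+1)) //; ring. Qed.

Lemma Qf_split d i : (i <= d)%N -> a 0%N + Qf d = Pf d i + Qf i.
Proof.
move=> h; rewrite /Pf /Qf (@big_cat_nat _ _ _ i.+1) //=; ring.
Qed.

Lemma Nf_S d i : (i <= d)%N -> Nf d.+1 i = Nf d i + a d.+1 * Qf i.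
Proof. by move=> h; rewrite /Nf Pf_S //; ring. Qed.

Lemma Nf_diag d : Nf d.+1 d.+1 = Nf d d + a d.+1 * (a 0%N + Qf d).
Proof. by rewrite /Nf !Pf_diag Qf_S E2f_S; ring. Qed.

Lemma Nf_i d j : (j < d)%N -> Nf d j.+1 = Nf d j + a j.+1 * Pf d j.+1.
Proof. by move=> h; rewrite /Nf (@Pf_dn d j h) Qf_S E2f_S; ring. Qed.

Lemma cnt_S chi d : cnt chi d.+1 = (cnt chi d + chi d.+1)%N.
Proof. by rewrite /cnt big_nat_recr. Qed.

Lemma cnt_le chi d : (cnt chi d <= d)%N.
Proof.
elim: d => [|d IH]; first by rewrite /cnt big_geq.
by rewrite cnt_S; case: (chi d.+1); lia.
Qed.

Lemma Sn_S chi d : Sn chi d.+1 = Sn chi d + a d.+1 * (~~ chi d.+1)%:R.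
Proof. by rewrite /Sn big_nat_recr. Qed.

Lemma Dp_S chi d : Dp chi d.+1 = Dp chi d + a d.+1 *
   \sum_(0 <= k < d.+1) a k * (~~ (chi k && chi d.+1))%:R.
Proof.
rewrite /Dp big_nat_recr //=; congr (_ + _); rewrite big_distrr /=.
by apply: eq_bigr => k _; ring.
Qed.

Variable D : nat.
Hypothesis ha : forall k, (k <= D)%N -> 0 <= a k.
Hypothesis hmono : forall k l, (k <= l)%N -> (l <= D)%N -> a l <= a k.

Lemma Qf_ge0 i : (i <= D)%N -> 0 <= Qf i.
Proof.
move=> h; rewrite /Qf big_nat_cond; apply: sumr_ge0 => j /andP [/andP [_ hj] _].
apply: ha; lia.
Qed.

Lemma Pf_ge0 d i : (d <= D)%N -> 0 <= Pf d i.
Proof.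
move=> h; rewrite /Pf; apply: addr_ge0; first exact: ha.
rewrite big_nat_cond; apply: sumr_ge0 => j /andP [/andP [_ hj] _].
apply: ha; lia.
Qed.

Lemma Sn_le (chi : nat -> bool) d i : chi 0%N -> (d <= D)%N -> (i <= d)%N ->
  (d - i <= cnt chi d)%N -> Sn chi d <= Qf i.
Proof.
move=> h0; elim: d i => [|d IH] i hD hi hc.
  have -> : i = 0%N by lia.
  by rewrite /Sn big_nat1 h0 mulr0 Qf0.
rewrite Sn_S; move: hc; rewrite cnt_S; case hc1: (chi d.+1) => /= hc.
  rewrite mulr0 addr0.
  have [hid|hid] := leqP i d; first by apply: IH => //; lia.
  have -> : i = d.+1 by lia.
  rewrite Qf_S; have := IH d ltac:(lia) (leqnn d) ltac:(lia).
  have := ha d.+1 hD; lra.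
have := cnt_le chi d => hle.
case: i hi hc => [|j] hj hc; first by lia.
rewrite mulr1 Qf_S.
have [hjd|hjd] := leqP j.+1 d.
  have := IH j ltac:(lia) ltac:(lia) ltac:(lia).
  have := hmono j.+1 d.+1 ltac:(lia) hD; lra.
have -> : j = d by lia.
have := IH d ltac:(lia) (leqnn d) ltac:(lia); lra.
Qed.

Lemma Dp_le (chi : nat -> bool) d i : chi 0%N -> (d <= D)%N -> (i <= d)%N ->
  (d - i <= cnt chi d)%N -> Dp chi d <= Nf d i.
Proof.
move=> h0; elim: d i => [|d IH] i hD hi hc.
  have -> : i = 0%N by lia.
  by rewrite /Dp big_nat1 big_geq // /Nf Qf0 /E2f big_geq // mulr0 addr0.
rewrite Dp_S; move: hc; rewrite cnt_S; case hc1: (chi d.+1) => /= hc.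
  have -> : \sum_(0 <= k < d.+1) a k * (~~ (chi k && true))%:R = Sn chi d.
    by apply: eq_bigr => k _; rewrite andbT.
  have hadp := ha d.+1 hD.
  have [hid|hid] := leqP i d.
    rewrite Nf_S //.
    have := IH i ltac:(lia) hid ltac:(lia).
    have := @Sn_le chi d i h0 ltac:(lia) hid ltac:(lia).
    move=> h1 h2; have := ler_wpM2l hadp h1; lra.
  have -> : i = d.+1 by lia.
  rewrite Nf_diag.
  have := IH d ltac:(lia) (leqnn d) ltac:(lia).
  have := @Sn_le chi d d h0 ltac:(lia) (leqnn d) ltac:(lia).
  move=> h1 h2; have h3 := ler_wpM2l hadp h1.
  have := ha 0%N ltac:(lia).
  have := ler_wpM2l hadp (ha 0%N ltac:(lia)); rewrite mulr0; lra.
have -> : \sum_(0 <= k < d.+1) a k * (~~ (chi k && false))%:R = a 0%N + Qf d.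
  rewrite /Qf big_ltn //; congr (_ + _); first by rewrite andbF mulr1.
  by apply: eq_bigr => k _; rewrite andbF mulr1.
have := cnt_le chi d => hle.
case: i hi hc => [|j] hj hc; first by lia.
have [hjd|hjd] := leqP j.+1 d.
  rewrite Nf_S // Nf_i // (@Qf_split d j.+1 hjd).
  have := IH j ltac:(lia) ltac:(lia) ltac:(lia).
  have hP := @Pf_ge0 d j.+1 ltac:(lia).
  have := ler_wpM2r hP (hmono j.+1 d.+1 ltac:(lia) hD); lra.
have -> : j = d by lia.
rewrite Nf_diag; have := IH d ltac:(lia) (leqnn d) ltac:(lia); lra.
Qed.

End Comb.
Arguments Pf {R}. Arguments Qf {R}. Arguments E2f {R}. Arguments Nf {R}.
Arguments cnt : clear implicits. Arguments Dp {R}. Arguments Sn {R}.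
Definition frac {R : realType} (x : R) := x - (Num.floor x)%:~R.

Lemma frac_ge0 {R : realType} (x : R) : 0 <= frac x.
Proof. by rewrite /frac subr_ge0 Num.Theory.floor_le. Qed.

Lemma frac_lt1 {R : realType} (x : R) : frac x < 1.
Proof.
have := Num.Theory.floorD1_gt x; rewrite intrD /frac; lra.
Qed.

Lemma frac0 (R : realType) : frac (0 : R) = 0.
Proof. by rewrite /frac (Num.Theory.floor0 R) subr0. Qed.

Lemma fracNle1 {R : realType} (x : R) : frac x + frac (- x) <= 1.
Proof.
have h1 := frac_lt1 x; have h2 := frac_lt1 (- x).
have h3 := frac_ge0 x; have h4 := frac_ge0 (- x).
set k := (- (Num.floor x + Num.floor (- x)))%R.
have e : frac x + frac (- x) = k%:~R by rewrite /k /frac intrN intrD; ring.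
have : k%:~R < (2%:~R : R) by rewrite -e; lra.
rewrite ltr_int => hk.
have : (k <= 1)%R by lia.
by rewrite e -(ler_int R) => /le_trans; apply.
Qed.

Lemma exists_min {R : realType} (h : nat -> R) n :
  exists m, (m <= n)%N /\ forall k, (k <= n)%N -> h m <= h k.
Proof.
elim: n => [|n [m [hm IH]]].
  by exists 0%N; split => // k; rewrite leqn0 => /eqP ->.
have [lt|ge] := ltP (h n.+1) (h m).
  exists n.+1; split => // k; rewrite leq_eqVlt => /orP [/eqP -> //|hk].
  apply: le_trans (ltW lt) (IH k _); lia.
exists m; split; first lia.
move=> k; rewrite leq_eqVlt => /orP [/eqP -> //|hk]; apply: IH; lia.
Qed.

Lemma sym_sum {R : realType} (g : nat -> nat -> R) n :
  \sum_(0 <= m < n) \sum_(0 <= k < n) g k m =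
  \sum_(0 <= m < n) (\sum_(0 <= k < m) (g k m + g m k) + g m m).
Proof.
elim: n => [|n IH]; first by rewrite !big_geq.
rewrite big_nat_recr //= [RHS]big_nat_recr //= -IH big_split /=.
rewrite (eq_bigr (fun m => \sum_(0 <= k < n) g k m + g n m)); last first.
  by move=> m _; rewrite big_nat_recr.
rewrite big_split /= [in LHS]big_nat_recr //=; ring.
Qed.

Lemma Svx (R : realType) d (w : nat -> R) (lam : 'I_d.+1 -> R) (j : 'I_d) :
  (\sum_(k < d.+1) lam k *: S_vertex w k) 0 j =
  - lam ord0 * w 0%N + lam (lift ord0 j) * w j.+1.
Proof.
rewrite summxE big_ord_recl /S_vertex unlift_none !mxE.
rewrite (eq_bigr (fun k : 'I_d => lam (lift ord0 k) * (w k.+1 * (j == k)%:R))); last first.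
  by move=> k _; rewrite liftK !mxE eqxx.
rewrite (bigD1 j) //= eqxx big1 => [|k /negPf hk]; last by rewrite eq_sym hk !mulr0.
rewrite /= !mulr1 addr0 mulrN mulNr. done.
Qed.

Theorem proposition5p8 (R : realType) (d : nat) (w : nat -> R)
  (wpos : forall k : nat, (k <= d)%N -> 0 < w k)
  (wmono : forall k l : nat, (k <= l)%N -> (l <= d)%N -> w k <= w l)
  (i : nat) (hi1 : (1 <= i)%N) (hi2 : (i <= d.-1)%N) :
  @successive_covering_min R d i (@S_simplex R d w) <=
  ((1 / w 0%N + \sum_(i.+1 <= k < d.+1) 1 / w k) *
     (\sum_(1 <= j < i.+1) 1 / w j)
   + \sum_(1 <= s < i.+1) \sum_(s.+1 <= t < i.+1) 1 / (w s * w t))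
  / (\sum_(0 <= k < d.+1) 1 / w k).
Proof.
case: d w wpos wmono hi2 => [|d] w wpos wmono hi2; first by rewrite /= in hi2; lia.
rewrite /= in hi2.
pose a := fun k : nat => 1 / w k.
have apos : forall k, (k <= d.+1)%N -> 0 < a k.
  by move=> k hk; rewrite /a divr_gt0 // wpos.
have ha : forall k, (k <= d.+1)%N -> 0 <= a k.
  by move=> k hk; exact: ltW (apos k hk).
have hmono : forall k l, (k <= l)%N -> (l <= d.+1)%N -> a l <= a k.
  move=> k l hkl hl; rewrite /a !div1r lef_pV2 ?posrE ?wpos //; last lia.
  exact: wmono.
have eN : ((1 / w 0%N + \sum_(i.+1 <= k < d.+2) 1 / w k) *
     (\sum_(1 <= j < i.+1) 1 / w j)
   + \sum_(1 <= s < i.+1) \sum_(s.+1 <= t < i.+1) 1 / (w s * w t))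
   = Nf a d.+1 i.
  rewrite /Nf /Pf /Qf /E2f; congr (_ + _).
  apply: eq_bigr => s _; apply: eq_bigr => t _.
  by rewrite /a mulf_div mulr1.
rewrite eN.
set W := \sum_(0 <= k < d.+2) 1 / w k.
have eW : W = \sum_(0 <= k < d.+2) a k by [].
have Wpos : 0 < W.
  rewrite eW big_ltn //.
  have : 0 <= \sum_(1 <= k < d.+2) a k.
    rewrite big_nat_cond; apply: sumr_ge0 => k /andP [/andP [_ hk] _].
    apply: ha; lia.
  have := apos 0%N isT; lra.
have Npos : 0 < Nf a d.+1 i.
  rewrite /Nf.
  have hE : 0 <= E2f a i.
    rewrite /E2f big_nat_cond; apply: sumr_ge0 => s /andP [/andP [_ hs] _].
    rewrite big_nat_cond; apply: sumr_ge0 => t /andP [/andP [_ ht] _].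
    apply: mulr_ge0; apply: ha; lia.
  have hP : a 0%N <= Pf a d.+1 i.
    rewrite /Pf lerDl big_nat_cond; apply: sumr_ge0 => k /andP [/andP [_ hk] _].
    apply: ha; lia.
  have hQ : a 1%N <= Qf a i.
    rewrite /Qf big_ltn; last lia.
    rewrite lerDl big_nat_cond; apply: sumr_ge0 => k /andP [/andP [_ hk] _].
    apply: ha; lia.
  have h0 := apos 0%N isT; have h1 := apos 1%N isT.
  have : a 0%N * a 1%N <= Pf a d.+1 i * Qf a i.
    apply: ler_pM => //; lra.
  have := mulr_gt0 h0 h1; lra.
set mu := Nf a d.+1 i / W.
have mupos : 0 < mu by apply: divr_gt0.
apply: ge_inf.
  by exists 0 => x [hx _].
split; first exact: ltW mupos.
move=> p B rB.
have [u hu] := @zeros_exist _ _ _ B p rB.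
set y := p + u *m B.
pose Y := fun k : nat => if k is j.+1 then y 0 (inord j) else 0.
pose chi := fun k => Y k == 0.
have hcnt : (d.+1 - i <= cnt chi d.+1)%N.
  apply: leq_trans hu _.
  rewrite /cnt big_add1 /= big_mkord -sum1_card big_mkcond /=.
  apply: eq_leq; apply: eq_bigr => j _.
  by rewrite inE /chi /Y inord_val; case: (_ == 0).
pose h := fun m => \sum_(0 <= k < d.+2) a k * frac (Y k - Y m).
have [m [hm hmin]] := exists_min h d.+1.
have hsum : \sum_(0 <= m < d.+2) a m * h m <= Dp a chi d.+1.
  rewrite /h.
  under eq_bigr do rewrite big_distrr /=.
  rewrite (sym_sum (fun k m => a m * (a k * frac (Y k - Y m)))) /Dp.
  rewrite big_nat_cond [X in _ <= X]big_nat_cond.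
  apply: ler_sum => m' /andP [/andP [_ hm'] _].
  rewrite subrr frac0 !mulr0 addr0.
  rewrite big_nat_cond [X in _ <= X]big_nat_cond.
  apply: ler_sum => k /andP [/andP [_ hk] _].
  have hak := ha k ltac:(lia); have ham := ha m' ltac:(lia).
  case hc: (chi k && chi m').
    move/andP: hc => [/eqP hk0 /eqP hm0]; rewrite hk0 hm0 subrr frac0 !mulr0.
    by rewrite addr0.
  rewrite mulr1; have := fracNle1 (Y k - Y m'); rewrite opprB => hf.
  have -> : a m' * (a k * frac (Y k - Y m')) + a k * (a m' * frac (Y m' - Y k))
     = a k * a m' * (frac (Y k - Y m') + frac (Y m' - Y k)) by ring.
  rewrite -[X in _ <= X]mulr1; apply: ler_wpM2l => //.
  exact: mulr_ge0.
have hDp : Dp a chi d.+1 <= Nf a d.+1 i.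
  apply: (@Dp_le R a d.+1 ha hmono chi d.+1 i) => //.
    by rewrite /chi /= eqxx.
  lia.
have hhm : W * h m <= \sum_(0 <= m < d.+2) a m * h m.
  rewrite eW big_distrl /=; apply: ler_sum_nat => k /andP [_ hk].
  apply: ler_wpM2l; first by apply: ha; lia.
  apply: hmin; lia.
have hmu : h m <= mu.
  rewrite /mu ler_pdivlMr // mulrC; apply: le_trans hhm _; apply: le_trans hsum hDp.
pose r := fun k => frac (Y k - Y m).
pose s := (mu - h m) / W.
have s_ge0 : 0 <= s by apply: divr_ge0; [lra | exact: ltW].
pose L := fun k => (r k + s) * a k / mu.
pose x := \sum_(k < d.+2) L k *: S_vertex w k.
pose z : 'rV[R]_d.+1 := map_mx (fun k : int => k%:~R)
   (\row_j (Num.floor (Y j.+1 - Y m) - Num.floor (Y 0%N - Y m))).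
exists x, z, y; split.
  exists (fun k => L k); split; [move=> k | split] => //.
    apply: divr_ge0; last exact: ltW.
    apply: mulr_ge0; last by apply: ha; have := ltn_ord k; lia.
    by apply: addr_ge0 => //; apply: frac_ge0.
  rewrite -(big_mkord xpredT L) /L -big_distrl /=.
  have -> : \sum_(0 <= k < d.+2) (r k + s) * a k = h m + s * W.
    rewrite (eq_bigr (fun k => a k * r k + s * a k)); last by move=> k _; ring.
    by rewrite big_split /= eW big_distrr.
  rewrite /s divfK ?gt_eqF // addrC subrK divff //.
  by rewrite gt_eqF.
split; first by exists (\row_j (Num.floor (Y j.+1 - Y m) - Num.floor (Y 0%N - Y m))).
split; first by exists u.
apply/rowP => j.
have e1 : y 0 j = Y j.+1 by rewrite /Y inord_val.
rewrite e1 !mxE Svx lift0.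
have wj := wpos j.+1 (ltn_ord j); have w0 := wpos 0%N isT.
rewrite /L /r /a /frac !intrB.
have Y0 : Y 0%N = 0 by [].
rewrite Y0.
move: (Y j.+1) (Y m) => Yj Ym.
by field; rewrite (gt_eqF mupos) (gt_eqF wj) (gt_eqF w0).
Qed.
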